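(* Let $S$ be a numerical semigroup with a unique Betti element. Then $S$ is telescopic and $\mathrm{Ap}(S)$ is $\alpha$-rectangular. Moreover, the converses fail: $S=\langle 4,6,13\rangle$ is associated to a plane branch (hence telescopic with $\alpha$-rectangular Apéry set) but does not have a unique Betti element.
   Context: A numerical semigroup is a submonoid $S$ of $(\mathbb N,+)$ with finite complement in $\mathbb N$; $g_1<\dots<g_\nu$ is its minimal system of generators, $m=g_1$, and $\mathrm{Ap}(S)=\{s\in S: s-m\notin S\}$. For $i=2,\dots,\nu$: $\tau_i=\min\{h\in\mathbb N: hg_i\in\langle g_1,\dots,g_{i-1}\rangle\}-1$ and $\alpha_i=\max\{h\in\mathbb N: hg_i\in\mathrm{Ap}(S)\}$. $S$ is telescopic if $\mathrm{Ap}(S)=\{\sum_{i=2}^\nu\lambda_ig_i: 0\le\lambda_i\le\tau_i\}$; $S$ is associated to a plane branch if it is telescopic and $(\tau_i+1)g_i<g_{i+1}$ for all $i=2,\dots,\nu-1$; $\mathrm{Ap}(S)$ is $\alpha$-rectangular if $\mathrm{Ap}(S)=\{\sum_{i=2}^\nu\lambda_ig_i: 0\le\lambda_i\le\alpha_i\}$. $S$ has a unique Betti element if (equivalently) there exist pairwise coprime integers $a_1,\dots,a_\nu>1$ with $g_i=\prod_{j\ne i}a_j$ for all $i$. *)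

(* Defs.v *)
(* Numerical semigroups over nat. Indices of the minimal
   generating system are 0-based: nth 0 g 0 = m = g_1 of the paper, and the
   paper's indices i = 2..nu correspond to 1 <= i < size g here. *)
From mathcomp Require Import all_boot.
Set Implicit Arguments. Unset Strict Implicit. Unset Printing Implicit Defensive.

Definition is_numsg (S : pred nat) : Prop :=
  [/\ S 0, (forall a b, S a -> S b -> S (a + b)) &
      exists N, forall n, N <= n -> S n].

Definition minimal_gens (S : pred nat) (g : seq nat) : Prop :=
  sorted ltn g /\
  forall x, x \in g <->
    [/\ 0 < x, S x &
        ~ exists a b, [/\ 0 < a, 0 < b, S a, S b & x = a + b]].

(* membership in the submonoid <s> of (N,+) generated by a list s *)
Fixpoint inSG (s : seq nat) (n : nat) : bool :=
  match s with
  | [::] => n == 0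
  | a :: s' => has (fun k => (k * a <= n) && inSG s' (n - k * a)) (iota 0 n.+1)
  end.

Definition apery (S : pred nat) (g : seq nat) (s : nat) : bool :=
  S s && ((s < nth 0 g 0) || ~~ S (s - nth 0 g 0)).

(* t = tau_i = min{h >= 1 : h g_i in <g_1,...,g_{i-1}>} - 1  (0-based i) *)
Definition is_tau (g : seq nat) (i t : nat) : Prop :=
  inSG (take i g) (t.+1 * nth 0 g i) /\
  forall h, 0 < h -> inSG (take i g) (h * nth 0 g i) -> t.+1 <= h.

Definition is_alpha (S : pred nat) (g : seq nat) (i a : nat) : Prop :=
  apery S g (a * nth 0 g i) /\ forall h, apery S g (h * nth 0 g i) -> h <= a.

Definition apery_box (S : pred nat) (g : seq nat) (bnd : nat -> nat) : Prop :=
  forall s, apery S g s <->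
    exists lam : nat -> nat,
      (forall i, 0 < i < size g -> lam i <= bnd i) /\
      s = \sum_(1 <= i < size g) lam i * nth 0 g i.

Definition telescopic (S : pred nat) (g : seq nat) : Prop :=
  exists tau : nat -> nat,
    (forall i, 0 < i < size g -> is_tau g i (tau i)) /\ apery_box S g tau.

Definition plane_branch (S : pred nat) (g : seq nat) : Prop :=
  exists tau : nat -> nat,
    [/\ (forall i, 0 < i < size g -> is_tau g i (tau i)),
        apery_box S g tau &
        forall i, 0 < i -> i.+1 < size g -> (tau i).+1 * nth 0 g i < nth 0 g i.+1].

Definition alpha_rectangular (S : pred nat) (g : seq nat) : Prop :=
  exists alpha : nat -> nat,
    (forall i, 0 < i < size g -> is_alpha S g i (alpha i)) /\
    apery_box S g alpha.

(* unique Betti element, via the characterization given in the paper: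
   pairwise coprime a_1..a_nu > 1 with g_i = prod_{j <> i} a_j *)
Definition unique_betti (g : seq nat) : Prop :=
  exists a : nat -> nat,
    [/\ (forall i, i < size g -> 1 < a i),
        (forall i j, i < size g -> j < size g -> i != j -> coprime (a i) (a j)) &
        forall i, i < size g -> nth 0 g i = \prod_(0 <= j < size g | j != i) a j].

(* Main.v *)
Require Import Defs.
From mathcomp Require Import all_boot zify.
From Stdlib Require Import Classical.
Set Implicit Arguments. Unset Strict Implicit.


Definition gen (s : seq nat) (x : nat) : Prop :=
  exists c : nat -> nat, x = \sum_(0 <= i < size s) c i * nth 0 s i.

Lemma sum_ind (g : seq nat) m n k (y : nat) : m <= k < n ->
  \sum_(m <= i < n) ((i == k) * y) * nth 0 g i = y * nth 0 g k.
Proof.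
move=> hk; rewrite (bigD1_seq k) ?mem_iota ?iota_uniq //=; last by lia.
rewrite eqxx big1 ?addn0 ?mul1n // => i /negbTE ->; by rewrite mul0n.
Qed.

Lemma inSG_cons a s x : inSG (a :: s) x =
  has (fun k => (k * a <= x) && inSG s (x - k * a)) (iota 0 x.+1).
Proof. by []. Qed.

Lemma inSGP s x : inSG s x <-> gen s x.
Proof.
elim: s x => [|a s IH] x.
  rewrite /=; split; first by move/eqP->; exists (fun _ => 0); rewrite big_geq.
  by case=> c ->; rewrite big_geq.
split.
  rewrite inSG_cons.
  move=> /hasP [k _ /andP [hk /IH [c hc]]].
  exists (fun i => if i is i'.+1 then c i' else k).
  rewrite big_ltn //= big_add1 /= -hc; lia.
case=> c hx.
set r := \sum_(0 <= i < size s) c i.+1 * nth 0 s i.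
have hsplit : x = c 0 * a + r by rewrite hx big_ltn //= big_add1.
have hr : inSG s r by apply/IH; exists (fun i => c i.+1).
rewrite inSG_cons; apply/hasP; case: (posnP a) => [a0|apos].
  exists 0; first by rewrite mem_iota.
  by rewrite mul0n leq0n subn0 hsplit a0 muln0 add0n.
exists (c 0); first by rewrite mem_iota; nia.
by rewrite hsplit leq_addr /= addKn.
Qed.

Lemma S_mul S k y : is_numsg S -> S y -> S (k * y).
Proof. case=> h0 hD _ Sy; elim: k => [|k IH]; first by rewrite mul0n.
by rewrite mulSn; apply: hD. Qed.

Lemma S_sum S g m n c : is_numsg S -> minimal_gens S g ->
  S (\sum_(m <= i < n) c i * nth 0 g i).
Proof.
move=> hS [_ hm]; have [h0 hD _] := hS.
apply: (big_ind S) => // i _.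
apply: S_mul => //; case: (ltnP i (size g)) => hi; last by rewrite nth_default.
by have [] := (hm (nth 0 g i)).1 (mem_nth 0 hi).
Qed.

Lemma S_gen S g x : is_numsg S -> minimal_gens S g -> S x -> gen g x.
Proof.
move=> hS [hsort hm].
elim: x {-2}x (leqnn x) => [|n IH] x hx Sx.
  have -> : x = 0 by lia.
  by exists (fun _ => 0); rewrite big1.
case: (posnP x) => [->|xpos]; first by exists (fun _ => 0); rewrite big1.
case: (boolP (x \in g)) => xg.
  exists (fun i => (i == index x g) * 1).
  rewrite sum_ind ?mul1n ?nth_index //; rewrite index_mem xg; lia.
have : exists a b, [/\ 0 < a, 0 < b, S a, S b & x = a + b].
  apply: NNPP => hne; move/negP: xg; apply; apply/hm; by split.
case=> a [b [a0 b0 Sa Sb hab]]; subst x.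
have [ca ->] := IH a ltac:(lia) Sa.
have [cb ->] := IH b ltac:(lia) Sb.
exists (fun i => ca i + cb i).
by rewrite -big_split /=; apply: eq_bigr => i _; rewrite mulnDl.
Qed.

Definition UBa (g : seq nat) (a : nat -> nat) : Prop :=
  [/\ (forall i, i < size g -> 1 < a i),
      (forall i j, i < size g -> j < size g -> i != j -> coprime (a i) (a j)) &
      forall i, i < size g -> nth 0 g i = \prod_(0 <= j < size g | j != i) a j].

Lemma prodE g a i : UBa g a -> i < size g ->
  a i * nth 0 g i = \prod_(0 <= j < size g) a j.
Proof.
case=> _ _ hG hi; rewrite hG // [RHS](bigD1_seq i) ?mem_iota ?iota_uniq //=.
lia.
Qed.

Lemma dvd_aG g a i j : UBa g a -> j < size g -> i != j -> a j %| nth 0 g i.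
Proof.
move=> hU hj hij; have [_ _ hG] := hU.
case: (ltnP i (size g)) => hi; last by rewrite nth_default.
rewrite hG // -big_filter (bigD1_seq j) /=.
- exact: dvdn_mulr.
- by rewrite mem_filter mem_iota eq_sym hij /=; lia.
- by rewrite filter_uniq ?iota_uniq.
Qed.

Lemma cop_aG g a i : UBa g a -> i < size g -> coprime (a i) (nth 0 g i).
Proof.
move=> hU hi; have [_ hc hG] := hU.
rewrite coprime_sym hG // big_seq_cond.
apply: (big_ind (fun x => coprime x (a i))); first exact: coprime1n.
  by move=> x y hx hy; rewrite coprimeMl hx hy.
move=> j /andP [hj hji]; apply: hc => //; move: hj; rewrite mem_iota; lia.
Qed.

Lemma reduce g a c : UBa g a -> 0 < size g ->
  exists c0 (lam : nat -> nat), (forall i, 0 < i < size g -> lam i < a i) /\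
   \sum_(0 <= i < size g) c i * nth 0 g i =
   c0 * nth 0 g 0 + \sum_(1 <= i < size g) lam i * nth 0 g i.
Proof.
move=> hU n0; have [ha _ _] := hU.
exists (c 0 + \sum_(1 <= i < size g) (c i %/ a i) * a 0), (fun i => c i %% a i).
split.
  move=> i hi; rewrite ltn_mod; have := ha i; lia.
rewrite big_ltn // mulnDl big_distrl /= -addnA; congr (_ + _).
rewrite -big_split /=; apply: eq_big_nat => i hi.
rewrite {1}(divn_eq (c i) (a i)) mulnDl -mulnA prodE //; last by lia.
by rewrite -(@prodE g a 0 hU n0) mulnA.
Qed.

Lemma decomp g a f j : UBa g a -> 0 < j < size g ->
  exists K, \sum_(1 <= i < size g) f i * nth 0 g i = f j * nth 0 g j + K * a j.
Proof.
move=> hU hj; rewrite (bigD1_seq j) ?mem_iota ?iota_uniq //=; last by lia.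
have : a j %| \sum_(i <- index_iota 1 (size g) | i != j) f i * nth 0 g i.
  apply: dvdn_sum => i hij; apply: dvdn_mull; apply: dvd_aG => //; lia.
by case/dvdnP => K ->; exists K.
Qed.

Lemma cancel_mod (x y G d : nat) : coprime d G -> x < d -> y < d ->
  x * G = y * G %[mod d] -> x = y.
Proof.
wlog le : x y / x <= y.
  move=> W hc hx hy he; case: (leqP x y) => h; first exact: W.
  by symmetry; apply: W => //; lia.
move=> hc hx hy /eqP; rewrite eq_sym eqn_mod_dvd ?leq_mul2r ?le ?orbT //.
rewrite -mulnBl Gauss_dvdl //; case: (posnP (y - x)) => h; first lia.
move/(dvdn_leq h); lia.
Qed.

Lemma key g a c lam mu : UBa g a -> 0 < size g -> 0 < nth 0 g 0 ->
  (forall i, 0 < i < size g -> lam i < a i) ->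
  (forall i, 0 < i < size g -> mu i < a i) ->
  c * nth 0 g 0 + \sum_(1 <= i < size g) lam i * nth 0 g i =
  \sum_(1 <= i < size g) mu i * nth 0 g i -> c = 0.
Proof.
move=> hU n0 G0 hl hm he.
have eqlm : forall j, 0 < j < size g -> lam j = mu j.
  move=> j hj.
  have [K1 e1] := @decomp g a lam j hU hj.
  have [K2 e2] := @decomp g a mu j hU hj.
  have : a j %| nth 0 g 0 by apply: dvd_aG => //; [lia | rewrite eq_sym; lia].
  case/dvdnP => K0 e0.
  apply: (@cancel_mod _ _ (nth 0 g j) (a j)).
  - apply: cop_aG hU _; lia.
  - exact: hl.
  - exact: hm.
  move: he; rewrite e1 e2 e0 => he.
  have he' : (c * K0 + K1) * a j + lam j * nth 0 g j = K2 * a j + mu j * nth 0 g j by lia.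
  by have := congr1 (modn ^~ (a j)) he'; rewrite /= !modnMDl.
have : \sum_(1 <= i < size g) lam i * nth 0 g i = \sum_(1 <= i < size g) mu i * nth 0 g i.
  by apply: eq_big_nat => i hi; rewrite eqlm.
move=> e; rewrite e in he; nia.
Qed.

Lemma apery_iff S g a s : is_numsg S -> minimal_gens S g -> UBa g a ->
  0 < size g -> 0 < nth 0 g 0 ->
  apery S g s <-> exists lam : nat -> nat,
    (forall i, 0 < i < size g -> lam i <= (a i).-1) /\
    s = \sum_(1 <= i < size g) lam i * nth 0 g i.
Proof.
move=> hS hmin hU n0 G0; have [ha _ _] := hU; have [S0 SD _] := hS.
split.
  case/andP=> Ss hap.
  have [c hc] := S_gen hS hmin Ss.
  have [c0 [lam [hl e]]] := @reduce g a c hU n0.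
  rewrite e in hc.
  case: (posnP c0) => [c00|c0pos].
    exists lam; split; last by rewrite hc c00 mul0n add0n.
    move=> i hi; have := hl i hi; lia.
  exfalso; move: hap; rewrite hc.
  have -> : c0 * nth 0 g 0 + \sum_(1 <= i < size g) lam i * nth 0 g i - nth 0 g 0
     = (c0 - 1) * nth 0 g 0 + \sum_(1 <= i < size g) lam i * nth 0 g i.
    by rewrite mulnBl mul1n; nia.
  have -> : (c0 * nth 0 g 0 + \sum_(1 <= i < size g) lam i * nth 0 g i < nth 0 g 0) = false.
    by apply/negbTE; rewrite -leqNgt; nia.
  have SG0 : S (nth 0 g 0) by have [] := (hmin.2 _).1 (mem_nth 0 n0).
  rewrite /= => /negP; apply; apply: SD; first exact: S_mul.
  exact: S_sum.
case=> mu [hmu ->]; apply/andP; split; first exact: S_sum.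
case: (ltnP (\sum_(1 <= i < size g) mu i * nth 0 g i) (nth 0 g 0)) => //= hge.
apply/negP => Ss.
have [c hc] := S_gen hS hmin Ss.
have [c0 [lam [hl e]]] := @reduce g a c hU n0.
rewrite e in hc.
have : c0.+1 = 0.
  apply: (@key g a c0.+1 lam mu hU n0 G0 hl).
    move=> i hi; have := hmu i hi; have := ha i; lia.
  rewrite mulSn -addnA -hc; lia.
by [].
Qed.

Lemma general S g : is_numsg S -> minimal_gens S g -> unique_betti g ->
  telescopic S g /\ alpha_rectangular S g.
Proof.
move=> hS hmin [a [ha hc hG]]; have hU : UBa g a by [].
have [S0 SD [N hN]] := hS.
have n0 : 0 < size g.
  have [c hcN] := S_gen hS hmin (hN N.+1 (leqnSn N)).
  case: (posnP (size g)) => // e; move: hcN; rewrite e big_geq //.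
have G0 : 0 < nth 0 g 0 by have [] := (hmin.2 _).1 (mem_nth 0 n0).
have SG : forall i, S (nth 0 g i).
  move=> i; case: (ltnP i (size g)) => hi; last by rewrite nth_default.
  by have [] := (hmin.2 _).1 (mem_nth 0 hi).
have box : apery_box S g (fun i => (a i).-1) by move=> s; exact: apery_iff.
have e0 := @prodE g a 0 hU n0.
split.
  exists (fun i => (a i).-1); split=> // i hi; split.
    rewrite prednK; last by have := ha i; lia.
    apply/inSGP; exists (fun k => (k == 0) * a 0).
    have hs : size (take i g) = i by rewrite size_take; case: ifP => //; lia.
    rewrite hs sum_ind; last by lia.
    rewrite nth_take; last by lia.
    by rewrite e0 prodE //; lia.
  move=> h hpos /inSGP [c hc'].
  rewrite prednK; last by have := ha i; lia.
  have : a i %| h * nth 0 g i.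
    rewrite hc' big_seq; apply: dvdn_sum => k; rewrite mem_iota => hk.
    apply: dvdn_mull; rewrite nth_take; last first.
      move: hk; rewrite size_take; case: ifP; lia.
    apply: dvd_aG => //; try lia.
    move: hk; rewrite size_take; case: ifP; lia.
  rewrite Gauss_dvdl; last by apply: cop_aG hU _; lia.
  exact: dvdn_leq.
exists (fun i => (a i).-1); split=> // i hi; split.
  apply/(apery_iff _ hS hmin hU n0 G0).
  exists (fun k => (k == i) * (a i).-1); split.
    move=> k hk; case: eqP => [->|_]; first by rewrite mul1n.
    by rewrite mul0n.
  by rewrite sum_ind.
move=> h /andP [Sh hap].
case: (leqP h (a i).-1) => // hlt; exfalso.
have hai : 0 < a i by have := ha i; lia.
have a00 : 0 < a 0 by have := ha 0; lia.
have eq : h * nth 0 g i = (h - a i) * nth 0 g i + a 0 * nth 0 g 0.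
  rewrite e0 -(@prodE g a i hU) ?mulnBl; [|lia]. 
  have : a i * nth 0 g i <= h * nth 0 g i by apply: leq_mul; lia.
  lia.
move: hap; rewrite eq.
have -> : ((h - a i) * nth 0 g i + a 0 * nth 0 g 0 < nth 0 g 0) = false.
  by apply/negbTE; rewrite -leqNgt; nia.
have -> : (h - a i) * nth 0 g i + a 0 * nth 0 g 0 - nth 0 g 0
   = (h - a i) * nth 0 g i + (a 0 - 1) * nth 0 g 0.
  have : nth 0 g 0 <= a 0 * nth 0 g 0 by rewrite leq_pmull.
  by rewrite [(a 0 - 1) * _]mulnBl mul1n => hle; rewrite addnBA.
rewrite /= => /negP; apply; apply: SD; exact: S_mul.
Qed.

Definition g3 := [:: 4; 6; 13].

Lemma sum3 (c : nat -> nat) :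
  \sum_(0 <= i < size g3) c i * nth 0 g3 i = c 0 * 4 + c 1 * 6 + c 2 * 13.
Proof. by rewrite big_ltn // big_ltn // big_ltn // big_geq // addn0 addnA. Qed.

Lemma sum3' (c : nat -> nat) :
  \sum_(1 <= i < size g3) c i * nth 0 g3 i = c 1 * 6 + c 2 * 13.
Proof. by rewrite big_ltn // big_ltn // big_geq // addn0. Qed.

Lemma Sc_char x : inSG g3 x <-> exists p q r, x = p * 4 + q * 6 + r * 13.
Proof.
rewrite inSGP /gen; split.
  by case=> c; rewrite sum3 => ->; exists (c 0), (c 1), (c 2).
by case=> p [q [r ->]]; exists (fun i => nth 0 [:: p; q; r] i); rewrite sum3.
Qed.

Lemma Sc_big n : 16 <= n -> inSG g3 n.
Proof.
move=> hn; apply/Sc_char.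
have hk := divn_eq (n - 16) 4; have hr := ltn_mod (n - 16) 4.
move: (_ %/ 4) (_ %% 4) hk hr => q r hk.
case: r hk => [|[|[|[|r]]]] hk _ //.
- by exists (4 + q), 0, 0; lia.
- by exists (q + 1), 0, 1; lia.
- by exists (q + 3), 1, 0; lia.
- by exists q, 1, 1; lia.
Qed.

Lemma apery_c s : apery (inSG g3) g3 s = (s \in [:: 0; 6; 13; 19]).
Proof.
case: (ltnP s 20) => h.
  do 20! (case: s h => [|s] h; first by vm_compute).
  by [].
rewrite /apery (_ : nth 0 g3 0 = 4) // (Sc_big (n := s - 4)); last by lia.
have -> : s < 4 = false by apply/negbTE; rewrite -leqNgt; lia.
rewrite andbF; symmetry; apply/negbTE; rewrite !inE; lia.
Qed.

Lemma numsg3 : is_numsg (inSG g3).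
Proof.
split; first by [].
  move=> x y /Sc_char [p [q [r ->]]] /Sc_char [p' [q' [r' ->]]].
  by apply/Sc_char; exists (p + p'), (q + q'), (r + r'); lia.
by exists 16 => n; apply: Sc_big.
Qed.

Lemma nodec x : ~~ has (fun a => inSG g3 a && inSG g3 (x - a)) (iota 1 x.-1) ->
  ~ exists a b, [/\ 0 < a, 0 < b, inSG g3 a, inSG g3 b & x = a + b].
Proof.
move=> /hasPn H [a [b [a0 b0 Sa Sb e]]].
have := H a; rewrite mem_iota (_ : x - a = b); last by lia.
rewrite Sa Sb /=; move=> /(_ ltac:(lia)); done.
Qed.

Lemma mingens3 : minimal_gens (inSG g3) g3.
Proof.
split; first by [].
move=> x; split.
  rewrite !inE => /or3P [] /eqP -> ; (split; [by [] | by [] | apply: nodec; vm_compute; reflexivity]).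
case=> x0 Sx hnd.
move/Sc_char: Sx => [p [q [r e]]].
apply: NNPP => hx; apply: hnd.
have hx' : (x != 4) && (x != 6) && (x != 13).
  by move: hx; rewrite !inE; case: (x == 4); case: (x == 6); case: (x == 13).
case: (posnP p) => p0.
  case: (posnP q) => q0.
    exists 13, (x - 13); split => //; first lia.
      by apply/Sc_char; exists p, q, (r - 1); lia.
    lia.
  exists 6, (x - 6); split => //; first lia.
    by apply/Sc_char; exists p, (q - 1), r; lia.
  lia.
exists 4, (x - 4); split => //; first lia.
  by apply/Sc_char; exists (p - 1), q, r; lia.
lia.
Qed.

Lemma box3 : apery_box (inSG g3) g3 (fun _ => 1).
Proof.
move=> s; rewrite apery_c; split.
  rewrite !inE => /or4P [] /eqP ->.
  - by exists (fun _ => 0); split => //; rewrite sum3'.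
  - by exists (fun i => if i == 1 then 1 else 0); split; [move=> i _; case: (i == 1) | rewrite sum3'].
  - by exists (fun i => if i == 1 then 0 else 1); split; [move=> i _; case: (i == 1) | rewrite sum3'].
  - by exists (fun _ => 1); split => //; rewrite sum3'.
case=> lam [hl ->]; rewrite sum3'.
have h1 := hl 1 isT; have h2 := hl 2 isT.
by case: (lam 1) h1 => [|[|]] // _; case: (lam 2) h2 => [|[|]].
Qed.

Lemma tau3 i : 0 < i < size g3 -> is_tau g3 i 1.
Proof.
case: i => [|[|[|i]]] // _; split => //; case => [|[|h]] //.
Qed.

Lemma alpha3 i : 0 < i < size g3 -> is_alpha (inSG g3) g3 i 1.
Proof.
case: i => [|[|[|i]]] // _; (split; first by rewrite apery_c);
  move=> h; rewrite apery_c /= !inE => /or4P [] /eqP; lia.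
Qed.

Lemma notub3 : ~ unique_betti g3.
Proof.
case=> a [ha hc hG].
have := hG 2 isT.
rewrite big_mkcond big_ltn // big_ltn // big_ltn // big_geq //= muln1.
move=> e.
have : prime 13 by [].
case/primeP => _ /(_ (a 0)).
have : a 0 %| 13 by rewrite [13]e dvdn_mulr.
move=> -> /(_ isT) /orP [] /eqP h0.
  by have := ha 0 isT; rewrite h0.
have := ha 1 isT; move: e; rewrite h0; lia.
Qed.

Theorem mainTheorem5 :
  (forall (S : pred nat) (g : seq nat),
     is_numsg S -> minimal_gens S g -> unique_betti g ->
     telescopic S g /\ alpha_rectangular S g) /\
  (let S := inSG [:: 4; 6; 13] in
   [/\ is_numsg S /\ minimal_gens S [:: 4; 6; 13],
       plane_branch S [:: 4; 6; 13], telescopic S [:: 4; 6; 13],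
       alpha_rectangular S [:: 4; 6; 13] & ~ unique_betti [:: 4; 6; 13]]).
Proof.
split; first exact: general.
rewrite /=; split.
- exact: (conj numsg3 mingens3).
- exists (fun _ => 1); split; [exact: tau3 | exact: box3 |].
  by case => [|[|[|i]]].
- exists (fun _ => 1); split; [exact: tau3 | exact: box3].
- exists (fun _ => 1); split; [exact: alpha3 | exact: box3].
- exact: notub3.
Qed.
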